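(* Let $\mathcal{L}$ be a set of lines of $\mathsf{PG}(7,q^3)$ satisfying (Pt): every point of $\mathsf{PG}(7,q^3)$ is incident with $0$ or $q+1$ elements of $\mathcal{L}$; (Pl): every plane contains $0$, $1$ or $q+1$ elements of $\mathcal{L}$; (Sd): every solid contains $0,1,q+1$ or $2q+1$ elements of $\mathcal{L}$; and (4d'): every $4$-dimensional subspace contains at most $q^2+2q+1$ elements of $\mathcal{L}$. Then no five lines of $\mathcal{L}$ form a pentagon.
   Context: A pentagon is a set of five lines $L_1,\dots,L_5$ such that $L_i$ meets $L_{i+1}$ (indices mod $5$) and the five intersection points are pairwise distinct. *)

(* Defs.v *)
From HB Require Import structures.
From mathcomp Require Import all_boot all_order all_algebra all_field.
Set Implicit Arguments. Unset Strict Implicit. Unset Printing Implicit Defensive.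
Import GRing.Theory.
Local Open Scope ring_scope.

(* PG(7, F): projective subspaces of projective dimension k are the
   vector subspaces of dimension k+1 of the 8-dimensional row space F^8. *)
Notation PGspace F := {vspace 'rV[F]_8}.

Definition nb_in (F : fieldType) (L : seq (PGspace F)) (S : PGspace F) : nat :=
  count (fun l => (l <= S)%VS) L.

Definition pentagon (F : fieldType) (f : 'I_5 -> PGspace F) : Prop :=
  (forall i : 'I_5, \dim (f i) = 2%N) /\
  (forall i : 'I_5, \dim (f i :&: f (ordS i))%VS = 1%N) /\
  (forall i j : 'I_5, i != j ->
     (f i :&: f (ordS i))%VS != (f j :&: f (ordS j))%VS).

(* Main.v *)
Require Import Defs.
From HB Require Import structures.
From mathcomp Require Import all_boot all_order all_algebra all_field.
From mathcomp Require Import zify.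
Local Open Scope ring_scope.


Section Gen.
Variables (K : fieldType) (vT : vectType K).
Implicit Types U V W : {vspace vT}.

Lemma dimD_le U V : (\dim (U + V) <= \dim U + \dim V)%N.
Proof. have := dimv_sum_cap U V; lia. Qed.

Lemma dimv_capE U V : \dim (U :&: V) = (\dim U + \dim V - \dim (U + V))%N.
Proof. have := dimv_sum_cap U V; lia. Qed.

Lemma eqv_dim U V : (U <= V)%VS -> (\dim V <= \dim U)%N -> U = V.
Proof. by move=> h1 h2; apply/eqP; rewrite eqEdim h1 h2. Qed.

Lemma dim_sub_le U V : (U <= V)%VS -> (\dim U <= \dim V)%N.
Proof. exact: dimvS. Qed.
End Gen.
Arguments dimD_le {K vT}.
Arguments dimv_capE {K vT}.
Arguments eqv_dim {K vT U V}.
Arguments dim_sub_le {K vT U V}.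

Lemma count_split (T : Type) (a b : pred T) s :
  count a s = (count (fun x => a x && b x) s + count (fun x => a x && ~~ b x) s)%N.
Proof. elim: s => //= x s ->; case: (a x); case: (b x) => /=; lia. Qed.

Lemma count_le_in (T : eqType) (a b : pred T) s :
  (forall x, x \in s -> a x -> b x) -> (count a s <= count b s)%N.
Proof.
elim: s => //= x s IH H.
have H1 : (forall y, y \in s -> a y -> b y) by move=> y ys; apply: H; rewrite inE ys orbT.
have := IH H1; case ax: (a x); last by case: (b x) => /=; lia.
by rewrite (H x (mem_head _ _) ax) /=; lia.
Qed.

Lemma count_pos_has (T : Type) (a : pred T) s : (0 < count a s)%N -> has a s.
Proof. by rewrite -has_count. Qed.



Section Gen2.
Variables (K : fieldType) (vT : vectType K).
Implicit Types U V W P X : {vspace vT}.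

Lemma add_point_dim U P : \dim P = 1%N -> ~~ (P <= U)%VS -> \dim (U + P) = (\dim U).+1.
Proof.
move=> dP nPU.
have h1 := dimvS (capvSr U P).
suff : \dim (U :&: P) = 0%N by have := dimv_sum_cap U P; move: dP; clear; lia.
apply/eqP; rewrite dimv_eq0; apply/eqP.
have : \dim (U :&: P) != 1%N.
  apply/eqP => e; have e1 : (U :&: P)%VS = P by apply: eqv_dim; [exact: capvSr | rewrite e dP].
  by move: nPU; rewrite -e1 capvSl.
move=> ne; apply/eqP; rewrite -dimv_eq0; move: h1 ne; rewrite dP; clear; lia.
Qed.

Lemma two_lines U V P : \dim U = 2%N -> \dim V = 2%N -> U != V ->
  (U <= P)%VS -> (V <= P)%VS -> \dim P = 3%N -> (U + V)%VS = P.
Proof.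
move=> dU dV UV UP VP dP.
have h1 := dimvS (capvSl U V).
have : \dim (U :&: V) != 2%N.
  apply/eqP => e; have e1 : (U :&: V)%VS = U by apply: eqv_dim; [exact: capvSl | rewrite e dU].
  have e2 : U = V by apply: eqv_dim; [rewrite -e1 capvSr | rewrite dU dV].
  by rewrite e2 eqxx in UV.
move=> ne; apply: eqv_dim; first by rewrite subv_add UP VP.
have := dimv_sum_cap U V; move: dU dV dP h1 ne; clear; lia.
Qed.

Lemma cap0_contra X U V : \dim X = 1%N -> (X <= U)%VS -> (X <= V)%VS ->
  \dim (U :&: V) = 0%N -> False.
Proof.
move=> dX XU XV d0.
have h : (X <= U :&: V)%VS by rewrite subv_cap XU XV.
by have := dimvS h; rewrite d0 dX.
Qed.

Lemma dim5_contra S U : \dim S = 5%N -> (S <= U)%VS -> (\dim U <= 4)%N -> False.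
Proof. by move=> dS SU dU; have := dimvS SU; rewrite dS; move: dU; clear; lia. Qed.
End Gen2.
Arguments add_point_dim {K vT U P}.
Arguments two_lines {K vT U V P}.
Arguments cap0_contra {K vT X U V}.
Arguments dim5_contra {K vT S U}.

Lemma count_or_disj (T : Type) (P Q : pred T) s : (forall x, P x -> Q x -> False) ->
  count (fun x => P x || Q x) s = (count P s + count Q s)%N.
Proof.
move=> H; elim: s => //= x s ->.
case Px: (P x); case Qx: (Q x) => /=; try lia.
by case: (H x Px Qx).
Qed.

Lemma count_has_disj (T : eqType) (C : T -> pred T) (ms s : seq T) : uniq ms ->
  (forall m1 m2 x, m1 \in ms -> m2 \in ms -> m1 != m2 -> C m1 x -> C m2 x -> False) ->
  count (fun x => has (fun m => C m x) ms) s = \sum_(m <- ms) count (C m) s.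
Proof.
elim: ms => [|m ms IH] /=.
  by move=> _ _; rewrite big_nil; elim: s.
move=> /andP [mms ums] H; rewrite big_cons -IH //; last first.
  move=> m1 m2 x h1 h2; apply: H; by rewrite inE ?h1 ?h2 orbT.
apply: count_or_disj => x Cx /hasP [m2 m2in Cm2].
apply: (H m m2 x) => //; first by rewrite inE eqxx.
  by rewrite inE m2in orbT.
by apply/eqP => e; rewrite e m2in in mms.
Qed.

Lemma sum_ge (T : eqType) (r : seq T) (k : nat) (G : T -> nat) :
  (forall m, m \in r -> k <= G m)%N -> (k * size r <= \sum_(m <- r) G m)%N.
Proof.
elim: r => [|m r IH] H /=; first by rewrite muln0.
rewrite big_cons mulnS; apply: leq_add; first by apply: H; rewrite inE eqxx.
by apply: IH => x hx; apply: H; rewrite inE hx orbT.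
Qed.

Lemma count_or_disj_in (T : eqType) (P Q : pred T) s : (forall x, x \in s -> P x -> Q x -> False) ->
  count (fun x => P x || Q x) s = (count P s + count Q s)%N.
Proof.
elim: s => //= x s IH H.
rewrite IH; last by move=> y ys; apply: H; rewrite inE ys orbT.
case Px: (P x); case Qx: (Q x) => /=; try lia.
by case: (H x (mem_head _ _) Px Qx).
Qed.

Lemma count_exc (T : eqType) (P D : pred T) s (xs : seq T) : uniq s ->
  (forall x, x \in s -> P x -> D x || (x \in xs)) -> (count P s <= count D s + size xs)%N.
Proof.
move=> us H.
apply: (@leq_trans (count (fun x => D x || (x \in xs)) s)).
  exact: count_le_in.
apply: (@leq_trans (count D s + count (fun x => x \in xs) s)).
  elim: s {us H} => //= y s IH; case: (D y); case: (y \in xs) => /=; lia.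
rewrite leq_add2l -size_filter; apply: uniq_leq_size; first exact: filter_uniq.
by move=> x; rewrite mem_filter => /andP [].
Qed.


Ltac vsub :=
  match goal with
  | |- is_true ((_ + _ <= _)%VS) => rewrite subv_add; apply/andP; split; vsub
  | |- _ => first [ exact: subvv | assumption
                  | apply: (subv_trans _ (addvSl _ _)); vsub
                  | apply: (subv_trans _ (addvSr _ _)); vsub
                  | match goal with H : is_true ((?U <= ?V)%VS) |- is_true ((_ <= ?V)%VS) =>
                      apply: (subv_trans _ H); vsub end ]
  end.

Record good (F : fieldType) (q : nat) (L : seq (PGspace F)) : Prop := Good {
  gLu : uniq L; gLl : (forall l, l \in L -> \dim l = 2%N);
  gPt : (forall P : PGspace F, \dim P = 1%N ->
          count (fun l => (P <= l)%VS) L \in [:: 0%N; q.+1]);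
  gPl : (forall S : PGspace F, \dim S = 3%N -> nb_in L S \in [:: 0%N; 1%N; q.+1]);
  gSd : (forall S : PGspace F, \dim S = 4%N ->
          nb_in L S \in [:: 0%N; 1%N; q.+1; (2 * q).+1]);
  gq : (1 < q)%N }.
Arguments gLu {F q L}.
Arguments gLl {F q L}.
Arguments gPt {F q L}.
Arguments gPl {F q L}.
Arguments gSd {F q L}.
Arguments gq {F q L}.

Lemma count_ge1 (T : eqType) (P : pred T) s x : x \in s -> P x -> (1 <= count P s)%N.
Proof. by move=> xs Px; rewrite -has_count; apply/hasP; exists x. Qed.

Lemma count_ge2 (T : eqType) (P : pred T) s x y : x \in s -> y \in s -> x != y ->
  P x -> P y -> (2 <= count P s)%N.
Proof.
move=> xs ys xy Px Py; rewrite (count_split _ P (pred1 x)).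
have h1 : (1 <= count (fun z => P z && pred1 x z) s)%N.
  by apply: (count_ge1 _ _ _ _ xs); rewrite /= Px eqxx.
have h2 : (1 <= count (fun z => P z && ~~ pred1 x z) s)%N.
  by apply: (count_ge1 _ _ _ _ ys); rewrite /= Py eq_sym xy.
lia.
Qed.

Lemma count_le1 (T : eqType) (P : pred T) s x : uniq s ->
  (forall y, y \in s -> P y -> y = x) -> (count P s <= 1)%N.
Proof.
move=> us H; apply: (@leq_trans (count (pred1 x) s)).
  by apply: count_le_in => y ys Py; rewrite /= (H y ys Py).
by rewrite count_uniq_mem //; case: (x \in s).
Qed.

Section Pencil.
Variables (F : fieldType) (q : nat) (L : seq (PGspace F)).
Hypothesis G : good F q L.

Lemma plane_count S a b : \dim S = 3%N -> a \in L -> b \in L -> a != b ->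
  (a <= S)%VS -> (b <= S)%VS -> nb_in L S = q.+1.
Proof.
case: G => Lu Ll Pt Pl Sd q2 dS aL bL ab aS bS.
have := count_ge2 _ (fun l => (l <= S)%VS) _ _ _ aL bL ab aS bS; have := Pl S dS; rewrite /nb_in !inE.
by case/or3P => /eqP ->; lia.
Qed.

Lemma solid_count S : \dim S = 4%N -> (q.+2 <= nb_in L S)%N -> nb_in L S = (2 * q).+1.
Proof.
case: G => Lu Ll Pt Pl Sd q2 dS h; move: h; have := Sd S dS; rewrite !inE.
by case/or4P => /eqP ->; lia.
Qed.


Lemma cap_line_dim1 (X c n : PGspace F) : \dim c = 2%N -> \dim n = 2%N -> \dim X = 1%N ->
  (X <= c)%VS -> (X <= n)%VS -> c != n -> \dim (c :&: n) = 1%N.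
Proof.
move=> dc dn dX Xc Xn cn.
have hXc : (X <= c :&: n)%VS by rewrite subv_cap Xc Xn.
have h1 := dimvS hXc; rewrite dX in h1.
have h2 := dimvS (capvSl c n).
suff : \dim (c :&: n) != 2%N by lia.
apply/eqP => e; have e1 : (c :&: n)%VS = c by apply: eqv_dim; [exact: capvSl | rewrite e dc].
have e2 : c = n by apply: eqv_dim; [rewrite -e1 capvSr | rewrite dc dn].
by rewrite e2 eqxx in cn.
Qed.

Lemma pencil_step1 a b : a \in L -> b \in L -> \dim (a :&: b) = 1%N ->
  forall n, n \in L -> (a :&: b <= n)%VS -> (n <= a + b)%VS.
Proof.
case: G => Lu Ll Pt Pl Sd q2 aL bL dX n nL Xn.
set X := (a :&: b)%VS in dX Xn *; set pi := (a + b)%VS.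
have da := Ll a aL; have db := Ll b bL; have dn := Ll n nL.
have Xa : (X <= a)%VS by exact: capvSl.
have Xb : (X <= b)%VS by exact: capvSr.
have dpi : \dim pi = 3%N by have := dimv_sum_cap a b; rewrite -/X -/pi; move: da db dX; clear; lia.
have ab : a != b by apply/eqP => eab; move: dX; rewrite /X eab capvv db.
have api : (a <= pi)%VS by exact: addvSl.
have bpi : (b <= pi)%VS by exact: addvSr.
have Xpi : (X <= pi)%VS by apply: subv_trans Xa api.
have npi : nb_in L pi = q.+1 by apply: (@plane_count _ a b _ aL bL ab).
apply/negPn/negP => npi'.
have dpn : \dim (pi :&: n) = 1%N.
  have hXc : (X <= pi :&: n)%VS by rewrite subv_cap Xn Xpi.
  have h1 := dimvS hXc; rewrite dX in h1.
  have h3 := dimvS (capvSr pi n).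
  suff : \dim (pi :&: n) != 2%N by move: h1 h3 dn; clear; lia.
  apply/eqP => e; have e1 : (pi :&: n)%VS = n by apply: eqv_dim; [exact: capvSr | rewrite e dn].
  by move: npi'; rewrite -e1 capvSl.
set S := (pi + n)%VS.
have dS : \dim S = 4%N by have := dimv_sum_cap pi n; rewrite -/S; move: dpi dn dpn; clear; lia.
have piS : (pi <= S)%VS by exact: addvSl.
have nS : (n <= S)%VS by exact: addvSr.
pose O := fun l : PGspace F => (l <= S)%VS && ~~ (l <= pi)%VS.
have cS : nb_in L S = (count (fun l => (l <= S)%VS && (l <= pi)%VS) L + count O L)%N
  by rewrite /nb_in (count_split _ _ (fun l => (l <= pi)%VS)).
have c1 : count (fun l => (l <= S)%VS && (l <= pi)%VS) L = nb_in L pi.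
  apply: eq_count => l /=; apply/idP/idP => [/andP [] //|lp]; rewrite lp andbT.
  exact: subv_trans lp piS.
have c2 : (1 <= count O L)%N by apply: (count_ge1 _ _ _ _ nL); rewrite /O nS npi'.
have nS2 : nb_in L S = (2 * q).+1 by apply: solid_count => //; move: cS c1 npi c2; clear; lia.
have cO : count O L = q by move: cS c1 npi nS2; clear; lia.
have claim : forall c, c \in L -> (c <= pi)%VS -> (X <= c)%VS ->
    (forall l, l \in L -> O l -> (l <= c + n)%VS) /\
    (q <= count (fun l => (l <= c + n)%VS && ~~ (l <= pi)%VS) L)%N.
  move=> c cL cpi Xc; have dc := Ll c cL.
  have cn : c != n by apply/eqP => e; move: npi'; rewrite -e cpi.
  have dcn := cap_line_dim1 _ _ _ dc dn dX Xc Xn cn.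
  set ta := (c + n)%VS.
  have dta : \dim ta = 3%N by have := dimv_sum_cap c n; rewrite -/ta; move: dc dn dcn; clear; lia.
  have taS : (ta <= S)%VS by rewrite subv_add nS (subv_trans cpi piS).
  have tapi : (ta + pi)%VS = S.
    apply: eqv_dim; first by rewrite subv_add taS piS.
    by apply: dimvS; rewrite subv_add addvSr (subv_trans (addvSr c n) (addvSl _ _)).
  have dtp : \dim (ta :&: pi) = 2%N by rewrite dimv_capE tapi dta dpi dS.
  have ctp : c = (ta :&: pi)%VS.
    by apply: eqv_dim; [rewrite subv_cap addvSl cpi | rewrite dtp dc].
  have nta : nb_in L ta = q.+1.
    by apply: (@plane_count _ c n _ cL nL cn) => //; [exact: addvSl | exact: addvSr].
  have cI : (count (fun l => (l <= ta)%VS && (l <= pi)%VS) L <= 1)%N.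
    apply: (count_le1 _ _ _ c Lu) => y yL /andP [yt yp].
    apply: eqv_dim; last by rewrite dc (Ll y yL).
    by rewrite ctp subv_cap yt yp.
  have cT := count_split _ (fun l => (l <= ta)%VS) (fun l => (l <= pi)%VS) L.
  rewrite -/(nb_in L ta) nta in cT.
  have hq : (q <= count (fun l => (l <= ta)%VS && ~~ (l <= pi)%VS) L)%N by move: cT cI; clear; lia.
  split => //.
  have hs : (count (fun l => (l <= ta)%VS && ~~ (l <= pi)%VS) L <=
             count (fun l => O l && (l <= ta)%VS) L)%N.
    apply: count_le_in => l _ /andP [lt lp]; rewrite /O lt lp (subv_trans lt taS).
    by [].
  have := count_split _ O (fun l => (l <= ta)%VS) L; rewrite cO => hsp.
  have h0 : count (fun l => O l && ~~ (l <= ta)%VS) L = 0%N by move: hs hsp hq; clear; lia.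
  move=> l lL Ol; apply/negPn/negP => nlt.
  have : (1 <= count (fun l => O l && ~~ (l <= ta)%VS) L)%N.
    by apply: (count_ge1 _ _ _ _ lL); rewrite /= Ol nlt.
  by rewrite h0.
have [_ ha] := claim a aL api Xa.
have [hb _] := claim b bL bpi Xb.
have ha2 := count_split _ (fun l => (l <= a + n)%VS && ~~ (l <= pi)%VS) (pred1 n) L.
have hn1 : (count (fun l => ((l <= a + n)%VS && ~~ (l <= pi)%VS) && pred1 n l) L <= 1)%N.
  by apply: (count_le1 _ _ _ n Lu) => y _ /andP [_ /eqP].
have : has (fun l => ((l <= a + n)%VS && ~~ (l <= pi)%VS) && ~~ pred1 n l) L.
  by rewrite has_count; move: ha ha2 hn1 q2; clear; lia.
case/hasP => l lL /andP [/andP [lta lpi] /= ln].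
have lS : (l <= S)%VS.
  apply: subv_trans lta _; rewrite subv_add nS andbT; exact: subv_trans api piS.
have ltb := hb l lL (introT andP (conj lS lpi)).
have hab : (a + n + (b + n))%VS = S.
  apply: eqv_dim.
    by rewrite /S /pi; vsub.
  by apply: dimvS; rewrite /S /pi; vsub.
have dan : \dim (a + n) = 3%N.
  have ane : a != n by apply/eqP => e; move: npi'; rewrite -e api.
  have := cap_line_dim1 _ _ _ da dn dX Xa Xn ane; have := dimv_sum_cap a n; move: da dn; clear; lia.
have dbn : \dim (b + n) = 3%N.
  have bne : b != n by apply/eqP => e; move: npi'; rewrite -e bpi.
  have := cap_line_dim1 _ _ _ db dn dX Xb Xn bne; have := dimv_sum_cap b n; move: db dn; clear; lia.
have dab : \dim ((a + n) :&: (b + n)) = 2%N by rewrite dimv_capE hab dan dbn dS.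
have nab : n = ((a + n) :&: (b + n))%VS.
  by apply: eqv_dim; [rewrite subv_cap !addvSr | rewrite dab dn].
have ln' : l = n.
  apply: eqv_dim; last by rewrite dn (Ll l lL).
  by rewrite nab subv_cap lta ltb.
by rewrite ln' eqxx in ln.
Qed.

Lemma pencil a b : a \in L -> b \in L -> \dim (a :&: b) = 1%N ->
  forall l, l \in L -> (l <= a + b)%VS -> (a :&: b <= l)%VS.
Proof.
move=> aL bL dX l lL lpi.
have [Lu Ll Pt Pl Sd q2] := G.
have da := Ll a aL; have db := Ll b bL.
have ab : a != b by apply/eqP => eab; move: dX; rewrite eab capvv db.
have npi : nb_in L (a + b) = q.+1.
  apply: (@plane_count _ a b _ aL bL ab); [|exact: addvSl|exact: addvSr].
  by have := dimv_sum_cap a b; rewrite da db dX; clear; lia.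
have cX : count (fun l => (a :&: b <= l)%VS) L = q.+1.
  have := Pt _ dX; rewrite !inE => /orP [/eqP h|/eqP //].
  have : (1 <= count (fun l => (a :&: b <= l)%VS) L)%N.
    by apply: (count_ge1 _ _ _ _ aL); exact: capvSl.
  by rewrite h.
have cs := count_split _ (fun l => (l <= a + b)%VS) (fun l => (a :&: b <= l)%VS) L.
have e : count (fun l => (l <= a + b)%VS && (a :&: b <= l)%VS) L =
         count (fun l => (a :&: b <= l)%VS) L.
  apply: eq_in_count => y yL /=; case h: (a :&: b <= y)%VS; rewrite ?andbT ?andbF //.
  exact: pencil_step1 aL bL dX y yL h.
rewrite -/(nb_in L (a + b)) npi e cX in cs.
apply/negPn/negP => nX.
have : (1 <= count (fun l => (l <= a + b)%VS && ~~ (a :&: b <= l)%VS) L)%N.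
  by apply: (count_ge1 _ _ _ _ lL); rewrite /= lpi nX.
lia.
Qed.

Lemma pencil_pt a b X : a \in L -> b \in L -> a != b -> \dim X = 1%N ->
  (X <= a)%VS -> (X <= b)%VS -> forall l, l \in L -> (l <= a + b)%VS -> (X <= l)%VS.
Proof.
move=> aL bL ab dX Xa Xb l lL lab.
have da := gLl G _ aL; have db := gLl G _ bL.
have dc := cap_line_dim1 _ _ _ da db dX Xa Xb ab.
have eX : X = (a :&: b)%VS.
  by apply: eqv_dim; [rewrite subv_cap Xa Xb | rewrite dc dX].
rewrite eX; exact: pencil _ _ aL bL dc l lL lab.
Qed.

Lemma plane_dim a b X : a \in L -> b \in L -> a != b -> \dim X = 1%N ->
  (X <= a)%VS -> (X <= b)%VS -> \dim (a + b) = 3%N.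
Proof.
move=> aL bL ab dX Xa Xb.
have da := gLl G _ aL; have db := gLl G _ bL.
have dc := cap_line_dim1 _ _ _ da db dX Xa Xb ab.
by have := dimv_sum_cap a b; rewrite da db dc; clear; lia.
Qed.

End Pencil.
Arguments plane_count {F q L} G {S a b}.
Arguments solid_count {F q L} G {S}.
Arguments cap_line_dim1 {F X c n}.
Arguments pencil_pt {F q L} G {a b X}.
Arguments plane_dim {F q L} G {a b X}.



Section Core.
Variables (F : fieldType) (q : nat) (L : seq (PGspace F)).
Hypothesis G : good F q L.
Variables Q0 Q1 Q2 Q3 Q4 : PGspace F.
Hypotheses (d0 : \dim Q0 = 1%N) (d1 : \dim Q1 = 1%N) (d2 : \dim Q2 = 1%N)
  (d3 : \dim Q3 = 1%N) (d4 : \dim Q4 = 1%N).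
Local Notation la := (Q4 + Q0)%VS.
Local Notation lb := (Q0 + Q1)%VS.
Local Notation lc := (Q1 + Q2)%VS.
Local Notation ld := (Q2 + Q3)%VS.
Local Notation le := (Q3 + Q4)%VS.
Hypotheses (aL : la \in L) (bL : lb \in L) (cL : lc \in L) (dL : ld \in L) (eL : le \in L).
Hypotheses (ab : la != lb) (bc : lb != lc) (cd : lc != ld) (de : ld != le) (ea : le != la).
Local Notation p0 := (la + lb)%VS.
Local Notation p1 := (lb + lc)%VS.
Local Notation p2 := (lc + ld)%VS.
Local Notation p3 := (ld + le)%VS.
Local Notation p4 := (le + la)%VS.
Local Notation Sg := (la + lb + lc + ld + le)%VS.

Lemma dla : \dim la = 2%N. Proof. exact: gLl G _ aL. Qed.
Lemma dlb : \dim lb = 2%N. Proof. exact: gLl G _ bL. Qed.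
Lemma dlc : \dim lc = 2%N. Proof. exact: gLl G _ cL. Qed.
Lemma dld : \dim ld = 2%N. Proof. exact: gLl G _ dL. Qed.
Lemma dle : \dim le = 2%N. Proof. exact: gLl G _ eL. Qed.

Lemma pen0 l : l \in L -> (l <= p0)%VS -> (Q0 <= l)%VS.
Proof. by apply: (pencil_pt G aL bL ab d0); vsub. Qed.
Lemma pen1 l : l \in L -> (l <= p1)%VS -> (Q1 <= l)%VS.
Proof. by apply: (pencil_pt G bL cL bc d1); vsub. Qed.
Lemma pen2 l : l \in L -> (l <= p2)%VS -> (Q2 <= l)%VS.
Proof. by apply: (pencil_pt G cL dL cd d2); vsub. Qed.
Lemma pen3 l : l \in L -> (l <= p3)%VS -> (Q3 <= l)%VS.
Proof. by apply: (pencil_pt G dL eL de d3); vsub. Qed.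
Lemma pen4 l : l \in L -> (l <= p4)%VS -> (Q4 <= l)%VS.
Proof. by apply: (pencil_pt G eL aL ea d4); vsub. Qed.

Lemma dp0 : \dim p0 = 3%N. Proof. by apply: (plane_dim G aL bL ab d0); vsub. Qed.
Lemma dp1 : \dim p1 = 3%N. Proof. by apply: (plane_dim G bL cL bc d1); vsub. Qed.
Lemma dp2 : \dim p2 = 3%N. Proof. by apply: (plane_dim G cL dL cd d2); vsub. Qed.
Lemma dp3 : \dim p3 = 3%N. Proof. by apply: (plane_dim G dL eL de d3); vsub. Qed.
Lemma dp4 : \dim p4 = 3%N. Proof. by apply: (plane_dim G eL aL ea d4); vsub. Qed.

Lemma np0 : nb_in L p0 = q.+1.
Proof. by apply: (plane_count G dp0 aL bL ab); vsub. Qed.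
Lemma np1 : nb_in L p1 = q.+1.
Proof. by apply: (plane_count G dp1 bL cL bc); vsub. Qed.
Lemma np2 : nb_in L p2 = q.+1.
Proof. by apply: (plane_count G dp2 cL dL cd); vsub. Qed.
Lemma np3 : nb_in L p3 = q.+1.
Proof. by apply: (plane_count G dp3 dL eL de); vsub. Qed.
Lemma np4 : nb_in L p4 = q.+1.
Proof. by apply: (plane_count G dp4 eL aL ea); vsub. Qed.

Lemma nQ2p0 : ~~ (Q2 <= p0)%VS.
Proof.
apply/negP => h.
have cp : (lc <= p0)%VS by vsub.
have h0 := pen0 _ cL cp.
have blc : (lb <= lc)%VS by vsub.
have e1 : lb = lc by apply: eqv_dim => //; rewrite dlb dlc.
by move: bc; rewrite e1 eqxx.
Qed.

Lemma dS4 : \dim (p0 + Q2) = 4%N.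
Proof. by rewrite (add_point_dim d2 nQ2p0) dp0. Qed.

Lemma nQ3S4 : ~~ (Q3 <= p0 + Q2)%VS.
Proof.
apply/negP => h.
have p2S : (p2 <= p0 + Q2)%VS by vsub.
have Lu := gLu G.
have cs := count_split _ (fun l => (l <= p0 + Q2)%VS) (fun l => (l <= p0)%VS) L.
have h1 : (count (fun l => (l <= p0)%VS) L <=
           count (fun l => (l <= p0 + Q2)%VS && (l <= p0)%VS) L)%N.
  apply: count_le_in => l _ lp; rewrite lp andbT; exact: subv_trans lp (addvSl _ _).
have h2 : (count (fun l => (l <= p2)%VS) L <=
           count (fun l => (l <= p0 + Q2)%VS && ~~ (l <= p0)%VS) L)%N.
  apply: count_le_in => l lL lp; rewrite (subv_trans lp p2S) /=.
  apply/negP => l0; have q2l := pen2 _ lL lp.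
  by move: nQ2p0; rewrite (subv_trans q2l l0).
have n0 := np0; have n2 := np2; rewrite /nb_in in n0 n2.
have := gSd G _ dS4; rewrite /nb_in !inE.
move: cs h1 h2 n0 n2; clear.
by move=> cs h1 h2 n0 n2 /or4P [] /eqP; lia.
Qed.

Lemma eSg : Sg = (p0 + Q2 + Q3)%VS.
Proof. by apply: subv_anti; apply/andP; split; vsub. Qed.

Lemma dSg : \dim Sg = 5%N.
Proof. by rewrite eSg (add_point_dim d3 nQ3S4) dS4. Qed.

Lemma dle4 (U P : PGspace F) : \dim U = 3%N -> \dim P = 1%N -> (\dim (U + P) <= 4)%N.
Proof. by move=> dU dP; have := dimD_le U P; rewrite dU dP. Qed.

Lemma nQ3p0 : ~~ (Q3 <= p0)%VS.
Proof. by apply/negP => h; apply: (dim5_contra (U := p0 + Q2) dSg _ (dle4 _ _ dp0 d2)); vsub. Qed.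
Lemma nQ3p1 : ~~ (Q3 <= p1)%VS.
Proof. by apply/negP => h; apply: (dim5_contra (U := p1 + Q4) dSg _ (dle4 _ _ dp1 d4)); vsub. Qed.
Lemma nQ4p1 : ~~ (Q4 <= p1)%VS.
Proof. by apply/negP => h; apply: (dim5_contra (U := p1 + Q3) dSg _ (dle4 _ _ dp1 d3)); vsub. Qed.
Lemma nQ4p2 : ~~ (Q4 <= p2)%VS.
Proof. by apply/negP => h; apply: (dim5_contra (U := p2 + Q0) dSg _ (dle4 _ _ dp2 d0)); vsub. Qed.

Lemma dcap0d : \dim (p0 :&: ld) = 0%N.
Proof.
have h : (Sg <= p0 + ld)%VS by vsub.
have := dimvS h; have := dimD_le p0 ld; rewrite dimv_capE dSg dp0 dld; clear; lia.
Qed.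

Local Notation tau := (ld + Q0)%VS.
Definition Cm (m l : PGspace F) : bool :=
  (l <= m + ld)%VS && ~~ (l <= tau)%VS && (l != m).

Lemma nQ0d : ~~ (Q0 <= ld)%VS.
Proof. by apply/negP => h; apply: (cap0_contra d0 _ h dcap0d); vsub. Qed.

Lemma dtau : \dim tau = 3%N.
Proof. by rewrite (add_point_dim d0 nQ0d) dld. Qed.

Section M.
Variable m : PGspace F.
Hypotheses (mL : m \in L) (mp : (m <= p0)%VS) (ma : m != la) (mb : m != lb).

Lemma dm : \dim m = 2%N. Proof. exact: gLl G _ mL. Qed.
Lemma mQ0 : (Q0 <= m)%VS. Proof. exact: pen0 _ mL mp. Qed.

Lemma dmR : \dim (m + ld) = 4%N.
Proof.
have h : (m :&: ld <= p0 :&: ld)%VS.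
  by rewrite subv_cap capvSr (subv_trans (capvSl _ _) mp).
have := dimvS h; rewrite dcap0d => h0.
have := dimv_sum_cap m ld; rewrite dm dld; move: h0; clear; lia.
Qed.

Lemma tauR : (tau <= m + ld)%VS.
Proof. have h := mQ0; vsub. Qed.

Lemma Rp0 : ((m + ld) :&: p0)%VS = m.
Proof.
have h1 : (Sg <= (m + ld) + p0)%VS by vsub.
have h2 : ((m + ld) + p0 <= Sg)%VS by vsub.
have e : \dim ((m + ld) + p0) = 5%N.
  by have := dimvS h1; have := dimvS h2; rewrite dSg; clear; lia.
symmetry; apply: eqv_dim; first by rewrite subv_cap addvSl mp.
by rewrite dimv_capE e dmR dp0 dm.
Qed.

Lemma nQ1R : ~~ (Q1 <= m + ld)%VS.
Proof.
apply/negP => h.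
have h1 : (Q1 <= m)%VS by rewrite -Rp0 subv_cap h; vsub.
have h0 := mQ0.
have e : lb = m by apply: eqv_dim; [vsub | rewrite dlb dm].
by move: mb; rewrite e eqxx.
Qed.

Lemma nQ4R : ~~ (Q4 <= m + ld)%VS.
Proof.
apply/negP => h.
have h1 : (Q4 <= m)%VS by rewrite -Rp0 subv_cap h; vsub.
have h0 := mQ0.
have e : la = m by apply: eqv_dim; [vsub | rewrite dla dm].
by move: ma; rewrite e eqxx.
Qed.

Lemma md : m != ld.
Proof.
apply/eqP => e; have h : (ld <= p0)%VS by rewrite -e.
have h2 : (Q2 <= p0)%VS by apply: subv_trans h; exact: addvSl.
by move: nQ2p0; rewrite h2.
Qed.

Lemma mtau : ~~ (m <= tau)%VS.
Proof.
apply/negP => h.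
have h2 : (m + ld <= tau)%VS by rewrite subv_add h addvSl.
by have := dimvS h2; rewrite dmR dtau.
Qed.

Lemma countC : (q.-1 <= count (Cm m) L)%N.
Proof.
have Lu := gLu G.
have cs1 : nb_in L (m + ld) =
  (count (fun l => (l <= m + ld)%VS && (l <= tau)%VS) L +
   count (fun l => (l <= m + ld)%VS && ~~ (l <= tau)%VS) L)%N := count_split _ _ _ _.
have e1 : count (fun l => (l <= m + ld)%VS && (l <= tau)%VS) L = nb_in L tau.
  apply: eq_count => l /=; apply/idP/idP => [/andP [] //|lt].
  by rewrite lt andbT (subv_trans lt tauR).
have cs2 : count (fun l => (l <= m + ld)%VS && ~~ (l <= tau)%VS) L =
  (count (Cm m) L +
   count (fun l => (l <= m + ld)%VS && ~~ (l <= tau)%VS && ~~ (l != m)) L)%N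
  := count_split _ _ _ _.
have le1 : (count (fun l => (l <= m + ld)%VS && ~~ (l <= tau)%VS && ~~ (l != m)) L <= 1)%N.
  by apply: (count_le1 _ _ _ m Lu) => y _ /andP [_]; rewrite negbK => /eqP.
have mge : (1 <= count (fun l => (l <= m + ld)%VS && ~~ (l <= tau)%VS) L)%N.
  by apply: (count_ge1 _ _ _ _ mL); rewrite /= addvSl mtau.
have nR2 : (2 <= nb_in L (m + ld))%N.
  apply: (count_ge2 _ (fun l => (l <= m + ld)%VS) _ _ _ mL dL md); [exact: addvSl|exact: addvSr].
have nt1 : (1 <= nb_in L tau)%N by apply: (count_ge1 _ _ _ _ dL); exact: addvSl.
have hR := gSd G _ dmR; have ht := gPl G _ dtau.
have q2 := gq G.
rewrite !inE in hR ht.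
move: cs1 e1 cs2 le1 mge nR2 nt1 hR ht q2; clear.
move=> cs1 e1 cs2 le1 mge nR2 nt1 /or4P [] /eqP hR /or3P [] /eqP ht q2; lia.
Qed.

Lemma Cnot l : l \in L -> Cm m l ->
  [&& ~~ (l <= p0)%VS, ~~ (l <= p1)%VS, ~~ (l <= p2)%VS, ~~ (l <= p3)%VS & ~~ (l <= p4)%VS].
Proof.
move=> lL /andP [/andP [lR ltau] lm].
have dl := gLl G _ lL.
have ld' : l != ld by apply/eqP => e; move: ltau; rewrite e addvSl.
apply/and5P; split; apply/negP => h.
- have h1 : (l <= m)%VS by rewrite -Rp0 subv_cap lR h.
  have e : l = m by apply: eqv_dim => //; rewrite dl dm.
  by move: lm; rewrite e eqxx.
- have h1 := pen1 _ lL h.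
  by move: nQ1R; rewrite (subv_trans h1 lR).
- have e : (l + ld)%VS = p2 by apply: two_lines dl dld ld' h _ dp2; vsub.
  have h1 : (p2 <= m + ld)%VS by rewrite -e subv_add lR addvSr.
  have h2 : (Q1 <= p2)%VS by vsub.
  by move: nQ1R; rewrite (subv_trans h2 h1).
- have e : (l + ld)%VS = p3 by apply: two_lines dl dld ld' h _ dp3; vsub.
  have h1 : (p3 <= m + ld)%VS by rewrite -e subv_add lR addvSr.
  have h2 : (Q4 <= p3)%VS by vsub.
  by move: nQ4R; rewrite (subv_trans h2 h1).
- have h1 := pen4 _ lL h.
  by move: nQ4R; rewrite (subv_trans h1 lR).
Qed.

End M.

Lemma Cdisj m1 m2 l : m1 \in L -> (m1 <= p0)%VS -> m1 != la -> m1 != lb ->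
  m2 \in L -> (m2 <= p0)%VS -> m2 != la -> m2 != lb -> m1 != m2 ->
  Cm m1 l -> Cm m2 l -> False.
Proof.
move=> m1L mp1 ma1 mb1 m2L mp2 ma2 mb2 m12 /andP [/andP [l1 lt] _] /andP [/andP [l2 _] _].
have dm1 := gLl G _ m1L; have dm2 := gLl G _ m2L.
have e12 : (m1 + m2)%VS = p0 by apply: two_lines dm1 dm2 m12 mp1 mp2 dp0.
have hp : (p0 <= (m1 + ld) + (m2 + ld))%VS by rewrite -e12; vsub.
have hS1 : (Sg <= (m1 + ld) + (m2 + ld))%VS by vsub.
have hS2 : ((m1 + ld) + (m2 + ld) <= Sg)%VS by vsub.
have e5 : \dim ((m1 + ld) + (m2 + ld)) = 5%N.
  by have := dimvS hS1; have := dimvS hS2; rewrite dSg; clear; lia.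
have dc : \dim ((m1 + ld) :&: (m2 + ld)) = 3%N.
  by rewrite dimv_capE e5 (dmR _ m1L mp1) (dmR _ m2L mp2).
have et : tau = ((m1 + ld) :&: (m2 + ld))%VS.
  apply: eqv_dim; last by rewrite dc dtau.
  by rewrite subv_cap (tauR _ m1L mp1) (tauR _ m2L mp2).
by move: lt; rewrite et subv_cap l1 l2.
Qed.

Lemma thru2 l (P1 P2 : PGspace F) : l \in L -> (P1 + P2)%VS \in L ->
  (P1 <= l)%VS -> (P2 <= l)%VS -> l = (P1 + P2)%VS.
Proof.
move=> lL XL h1 h2; symmetry; apply: eqv_dim; first by rewrite subv_add h1 h2.
by rewrite (gLl G _ lL) (gLl G _ XL).
Qed.

Definition Mv (m : PGspace F) : bool := (m <= p0)%VS && (m != la) && (m != lb).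

Lemma core_false : (nb_in L Sg <= q ^ 2 + 2 * q + 1)%N -> False.
Proof.
move=> Fd.
have Lu := gLu G; have q2 := gq G.
pose ms := filter Mv L.
pose Cu := fun l => has (fun m => Cm m l) ms.
pose D0 := fun l : PGspace F => (l <= p0)%VS.
pose D1 := fun l : PGspace F => (l <= p1)%VS && ~~ (l <= p0)%VS.
pose D2 := fun l : PGspace F => (l <= p2)%VS && ~~ (l <= p0)%VS && ~~ (l <= p1)%VS.
pose D3 := fun l : PGspace F => (l <= p3)%VS && ~~ (l <= p0)%VS && ~~ (l <= p1)%VS
   && ~~ (l <= p2)%VS.
pose D4 := fun l : PGspace F => (l <= p4)%VS && ~~ (l <= p0)%VS && ~~ (l <= p1)%VS
   && ~~ (l <= p2)%VS && ~~ (l <= p3)%VS.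
have CuN : forall l, l \in L -> Cu l ->
  [&& ~~ (l <= p0)%VS, ~~ (l <= p1)%VS, ~~ (l <= p2)%VS, ~~ (l <= p3)%VS & ~~ (l <= p4)%VS].
  move=> l lL /hasP [m]; rewrite mem_filter => /andP [/andP [/andP [mp ma] mb] mL] Cml.
  exact: (Cnot _ mL mp ma mb _ lL Cml).
have hT : (count (fun l => D0 l || (D1 l || (D2 l || (D3 l || (D4 l || Cu l))))) L <= nb_in L Sg)%N.
  apply: count_le_in => l lL /or4P [h|h|h|/orP [h|/orP [h|h]]].
  - by apply: subv_trans h _; vsub.
  - by case/andP: h => h _; apply: subv_trans h _; vsub.
  - by case/andP: h => /andP [h _] _; apply: subv_trans h _; vsub.
  - by case/andP: h => /andP [/andP [h _] _] _; apply: subv_trans h _; vsub.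
  - by case/andP: h => /andP [/andP [/andP [h _] _] _] _; apply: subv_trans h _; vsub.
  - case/hasP: h => m; rewrite mem_filter => /andP [/andP [/andP [mp _] _] _] /andP [/andP [h _] _].
    by apply: subv_trans h _; vsub.
have DJ : forall l, l \in L -> Cu l -> [&& ~~ (l <= p0)%VS, ~~ (l <= p1)%VS, ~~ (l <= p2)%VS, ~~ (l <= p3)%VS & ~~ (l <= p4)%VS] := CuN.
have e5 : count (fun l => D4 l || Cu l) L = (count D4 L + count Cu L)%N.
  apply: count_or_disj_in => l lL h1 h2; move: h1 h2 (DJ l lL); rewrite /D0 /D1 /D2 /D3 /D4.
  by case: (Cu l); case: (l <= p0)%VS; case: (l <= p1)%VS; case: (l <= p2)%VS;
    case: (l <= p3)%VS; case: (l <= p4)%VS => //= _ _ /(_ isT).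
have e4 : count (fun l => D3 l || (D4 l || Cu l)) L = (count D3 L + count (fun l => D4 l || Cu l) L)%N.
  apply: count_or_disj_in => l lL h1 h2; move: h1 h2 (DJ l lL); rewrite /D0 /D1 /D2 /D3 /D4.
  by case: (Cu l); case: (l <= p0)%VS; case: (l <= p1)%VS; case: (l <= p2)%VS;
    case: (l <= p3)%VS; case: (l <= p4)%VS => //= _ _ /(_ isT).
have e3 : count (fun l => D2 l || (D3 l || (D4 l || Cu l))) L =
          (count D2 L + count (fun l => D3 l || (D4 l || Cu l)) L)%N.
  apply: count_or_disj_in => l lL h1 h2; move: h1 h2 (DJ l lL); rewrite /D0 /D1 /D2 /D3 /D4.
  by case: (Cu l); case: (l <= p0)%VS; case: (l <= p1)%VS; case: (l <= p2)%VS;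
    case: (l <= p3)%VS; case: (l <= p4)%VS => //= _ _ /(_ isT).
have e2 : count (fun l => D1 l || (D2 l || (D3 l || (D4 l || Cu l)))) L =
          (count D1 L + count (fun l => D2 l || (D3 l || (D4 l || Cu l))) L)%N.
  apply: count_or_disj_in => l lL h1 h2; move: h1 h2 (DJ l lL); rewrite /D0 /D1 /D2 /D3 /D4.
  by case: (Cu l); case: (l <= p0)%VS; case: (l <= p1)%VS; case: (l <= p2)%VS;
    case: (l <= p3)%VS; case: (l <= p4)%VS => //= _ _ /(_ isT).
have e1 : count (fun l => D0 l || (D1 l || (D2 l || (D3 l || (D4 l || Cu l))))) L =
          (count D0 L + count (fun l => D1 l || (D2 l || (D3 l || (D4 l || Cu l)))) L)%N.
  apply: count_or_disj_in => l lL h1 h2; move: h1 h2 (DJ l lL); rewrite /D0 /D1 /D2 /D3 /D4.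
  by case: (Cu l); case: (l <= p0)%VS; case: (l <= p1)%VS; case: (l <= p2)%VS;
    case: (l <= p3)%VS; case: (l <= p4)%VS => //= _ _ /(_ isT).
have c0 : count D0 L = q.+1 := np0.
have c1 : (q.+1 <= count D1 L + size [:: lb])%N.
  rewrite -np1; apply: count_exc => // l lL h; rewrite /D1 h /=.
  case h0: (l <= p0)%VS => //=; rewrite inE (thru2 _ _ _ lL bL (pen0 _ lL h0) (pen1 _ lL h)) eqxx.
  by [].
have c2 : (q.+1 <= count D2 L + size [:: lc])%N.
  rewrite -np2; apply: count_exc => // l lL h; rewrite /D2 h /=.
  have Q2l := pen2 _ lL h.
  case h0: (l <= p0)%VS => /=.
    by move: nQ2p0; rewrite (subv_trans Q2l h0).
  case h1: (l <= p1)%VS => //=.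
  by rewrite inE (thru2 _ _ _ lL cL (pen1 _ lL h1) Q2l) eqxx.
have c3 : (q.+1 <= count D3 L + size [:: ld])%N.
  rewrite -np3; apply: count_exc => // l lL h; rewrite /D3 h /=.
  have Q3l := pen3 _ lL h.
  case h0: (l <= p0)%VS => /=.
    by move: nQ3p0; rewrite (subv_trans Q3l h0).
  case h1: (l <= p1)%VS => /=.
    by move: nQ3p1; rewrite (subv_trans Q3l h1).
  case h2: (l <= p2)%VS => //=.
  by rewrite inE (thru2 _ _ _ lL dL (pen2 _ lL h2) Q3l) eqxx.
have c4 : (q.+1 <= count D4 L + size [:: la; le])%N.
  rewrite -np4; apply: count_exc => // l lL h; rewrite /D4 h /=.
  have Q4l := pen4 _ lL h.
  case h0: (l <= p0)%VS => /=.
    by rewrite inE (thru2 _ _ _ lL aL Q4l (pen0 _ lL h0)) eqxx.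
  case h1: (l <= p1)%VS => /=.
    by move: nQ4p1; rewrite (subv_trans Q4l h1).
  case h2: (l <= p2)%VS => /=.
    by move: nQ4p2; rewrite (subv_trans Q4l h2).
  case h3: (l <= p3)%VS => //=.
  by rewrite !inE (thru2 _ _ _ lL eL (pen3 _ lL h3) Q4l) eqxx orbT.
have cms : (q.+1 <= size ms + size [:: la; lb])%N.
  rewrite -np0 size_filter; apply: count_exc => // l lL h.
  rewrite /Mv h /= !inE.
  by case: (l =P la) => //=; case: (l =P lb).
have cCu : count Cu L = \sum_(m <- ms) count (Cm m) L.
  apply: count_has_disj; first exact: filter_uniq.
  move=> m1 m2 l; rewrite !mem_filter => /andP [/andP [/andP [mp1 ma1] mb1] m1L].
  move=> /andP [/andP [/andP [mp2 ma2] mb2] m2L] m12.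
  exact: (Cdisj _ _ _ m1L mp1 ma1 mb1 m2L mp2 ma2 mb2 m12).
have sCu : (q.-1 * size ms <= \sum_(m <- ms) count (Cm m) L)%N.
  apply: sum_ge => m; rewrite mem_filter => /andP [/andP [/andP [mp ma] mb] mL].
  by apply: countC.
have hmul : (q.-1 * q.-1 <= q.-1 * size ms)%N.
  by apply: leq_mul => //; move: cms q2; clear; simpl; lia.
move: Fd hT e1 e2 e3 e4 e5 c0 c1 c2 c3 c4 cCu sCu hmul q2; rewrite -mulnn.
set A := count _ L; set B := count _ L; set C := count _ L; set D := count _ L;
set E := count _ L; set X := count _ L.
clear; move=> Fd hT e1 e2 e3 e4 e5 c0 c1 c2 c3 c4 cCu sCu hmul q2; simpl in *.
have hsq : (q.-1 * q.-1 + 2 * q = q * q + 1)%N by move: q2; clear; case: q => // k _ /=; nia.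
move: Fd hT e1 e2 e3 e4 e5 c0 c1 c2 c3 c4 cCu sCu hmul q2 hsq.
generalize (q.-1 * q.-1)%N (q.-1 * size ms)%N (q * q)%N => u v w.
set Y := count (fun l => [|| D3 l, D4 l | Cu l]) L; set Z := count (fun l => D4 l || Cu l) L.
set Y3 := count D3 L; set Y4 := count D4 L; set YC := count Cu L; set SS := \sum_(m <- ms) _.
set NB := nb_in L Sg.
clearbody A B C D E X Y Z Y3 Y4 YC SS NB; lia.
Qed.

Lemma core_false2 : (forall S : PGspace F, \dim S = 5%N -> (nb_in L S <= q ^ 2 + 2 * q + 1)%N) -> False.
Proof. by move=> Fd; apply: core_false; apply: Fd; exact: dSg. Qed.

End Core.



Lemma line_two_pts (F : fieldType) (l P P' : PGspace F) : \dim l = 2%N -> \dim P = 1%N ->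
  \dim P' = 1%N -> (P <= l)%VS -> (P' <= l)%VS -> P != P' -> l = (P + P')%VS.
Proof.
move=> dl dP dP' Pl P'l PP.
have h1 := dimvS (capvSl P P').
have h0 : \dim (P :&: P') != 1%N.
  apply/eqP => e.
  have e1 : (P :&: P')%VS = P by apply: eqv_dim; [exact: capvSl | rewrite e dP].
  have e2 : (P :&: P')%VS = P' by apply: eqv_dim; [exact: capvSr | rewrite e dP'].
  have e3 : P = P' by rewrite -{1}e1 e2.
  by move: PP; rewrite e3 eqxx.
symmetry; apply: eqv_dim; first by rewrite subv_add Pl P'l.
have := dimv_sum_cap P P'; rewrite dl; move: h1 h0 dP dP'; clear; lia.
Qed.

Theorem mainTheorem18 (F : finFieldType) (q : nat) (hF : #|F| = (q ^ 3)%N)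
  (L : seq (PGspace F))
  (Luniq : uniq L)
  (Llines : forall l, l \in L -> \dim l = 2%N)
  (Pt : forall P : PGspace F, \dim P = 1%N ->
          count (fun l => (P <= l)%VS) L \in [:: 0%N; q.+1])
  (Pl : forall S : PGspace F, \dim S = 3%N ->
          nb_in L S \in [:: 0%N; 1%N; q.+1])
  (Sd : forall S : PGspace F, \dim S = 4%N ->
          nb_in L S \in [:: 0%N; 1%N; q.+1; (2 * q).+1])
  (Fd : forall S : PGspace F, \dim S = 5%N ->
          (nb_in L S <= q ^ 2 + 2 * q + 1)%N) :
  ~ exists f : 'I_5 -> PGspace F, (forall i, f i \in L) /\ pentagon f.
Proof.
move=> [f [fL [fd [fc fneq]]]].
have q2 : (1 < q)%N.
  have h2 : (1 < #|F|)%N.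
    by apply/card_gt1P; exists (0 : F), (1 : F); split => //; rewrite eq_sym GRing.oner_neq0.
  by move: h2; rewrite hF; case: q {hF Pt Pl Sd Fd} => [|[|q']].
have Gd : good F q L := @Good F q L Luniq Llines Pt Pl Sd q2.
pose i0 : 'I_5 := @Ordinal 5 0 isT.
pose i1 : 'I_5 := @Ordinal 5 1 isT.
pose i2 : 'I_5 := @Ordinal 5 2 isT.
pose i3 : 'I_5 := @Ordinal 5 3 isT.
pose i4 : 'I_5 := @Ordinal 5 4 isT.
have s0 : ordS i0 = i1 by apply: val_inj.
have s1 : ordS i1 = i2 by apply: val_inj.
have s2 : ordS i2 = i3 by apply: val_inj.
have s3 : ordS i3 = i4 by apply: val_inj.
have s4 : ordS i4 = i0 by apply: val_inj.
have c0 := fc i0; have c1 := fc i1; have c2 := fc i2; have c3 := fc i3; have c4 := fc i4.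
rewrite ?s0 ?s1 ?s2 ?s3 ?s4 in c0 c1 c2 c3 c4.
have n01 := fneq i0 i1 isT; have n12 := fneq i1 i2 isT; have n23 := fneq i2 i3 isT.
have n34 := fneq i3 i4 isT; have n40 := fneq i4 i0 isT.
rewrite ?s0 ?s1 ?s2 ?s3 ?s4 in n01 n12 n23 n34 n40.
set Q0 := (f i0 :&: f i1)%VS in c0 n01 n40 *.
set Q1 := (f i1 :&: f i2)%VS in c1 n01 n12 *.
set Q2 := (f i2 :&: f i3)%VS in c2 n12 n23 *.
set Q3 := (f i3 :&: f i4)%VS in c3 n23 n34 *.
set Q4 := (f i4 :&: f i0)%VS in c4 n34 n40 *.
have ea : f i0 = (Q4 + Q0)%VS.
  by apply: line_two_pts (fd i0) c4 c0 _ _ _; rewrite ?capvSl ?capvSr // eq_sym.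
have eb : f i1 = (Q0 + Q1)%VS.
  by apply: line_two_pts (fd i1) c0 c1 _ _ _; rewrite ?capvSl ?capvSr.
have ec : f i2 = (Q1 + Q2)%VS.
  by apply: line_two_pts (fd i2) c1 c2 _ _ _; rewrite ?capvSl ?capvSr.
have ed : f i3 = (Q2 + Q3)%VS.
  by apply: line_two_pts (fd i3) c2 c3 _ _ _; rewrite ?capvSl ?capvSr.
have ee : f i4 = (Q3 + Q4)%VS.
  by apply: line_two_pts (fd i4) c3 c4 _ _ _; rewrite ?capvSl ?capvSr.
have dist : forall i j : 'I_5, \dim (f i :&: f j)%VS = 1%N -> f i != f j.
  move=> i j h; apply/eqP => e; move: h; rewrite e capvv fd; by [].
apply: (core_false2 _ _ _ Gd _ _ _ _ _ c0 c1 c2 c3 c4 _ _ _ _ _ _ _ _ _ _ Fd).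
- by rewrite -ea.
- by rewrite -eb.
- by rewrite -ec.
- by rewrite -ed.
- by rewrite -ee.
- by rewrite -ea -eb; apply: dist.
- by rewrite -eb -ec; apply: dist.
- by rewrite -ec -ed; apply: dist.
- by rewrite -ed -ee; apply: dist.
- by rewrite -ee -ea; apply: dist.
Qed.
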